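(* Let $\Sigma=I_d$, $\beta_*\in\mathbb{R}^d$, $\sigma^2\ge0$. Define the deterministic equivalents of the min-norm interpolator as follows. If $d<n$: $\mathsf{B}_{\mathsf{R},0}=0$, $\mathsf{V}_{\mathsf{R},0}=\frac{\sigma^2d}{n-d}$, $\mathsf{B}_{\mathsf{N},0}=\|\beta_*\|_2^2$, $\mathsf{V}_{\mathsf{N},0}=\frac{\sigma^2\operatorname{Tr}(\Sigma^{-1})}{n-d}$. If $d>n$, with $\lambda_n>0$ solving $\operatorname{Tr}(\Sigma(\Sigma+\lambda_nI)^{-1})=n$: $\mathsf{B}_{\mathsf{R},0}=\frac{\lambda_n^2\langle\beta_*,\Sigma(\Sigma+\lambda_nI)^{-2}\beta_*\rangle}{1-n^{-1}\operatorname{Tr}(\Sigma^2(\Sigma+\lambda_nI)^{-2})}$, $\mathsf{V}_{\mathsf{R},0}=\frac{\sigma^2\operatorname{Tr}(\Sigma^2(\Sigma+\lambda_nI)^{-2})}{n-\operatorname{Tr}(\Sigma^2(\Sigma+\lambda_nI)^{-2})}$, $\mathsf{B}_{\mathsf{N},0}=\langle\beta_*,\Sigma(\Sigma+\lambda_nI)^{-1}\beta_*\rangle$, $\mathsf{V}_{\mathsf{N},0}=\frac{\sigma^2\operatorname{Tr}(\Sigma(\Sigma+\lambda_nI)^{-2})}{n-\operatorname{Tr}(\Sigma^2(\Sigma+\lambda_nI)^{-2})}$. Let $\mathsf{R}_0=\mathsf{B}_{\mathsf{R},0}+\mathsf{V}_{\mathsf{R},0}$ and $\mathsf{N}_0=\mathsf{B}_{\mathsf{N},0}+\mathsf{V}_{\mathsf{N},0}$.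 Then $$\mathsf{R}_0=\begin{cases}\mathsf{N}_0-\|\beta_*\|_2^2,& d<n,\\ \sqrt{\big[\mathsf{N}_0-(\|\beta_*\|_2^2-\sigma^2)\big]^2+4\|\beta_*\|_2^2\sigma^2}-\sigma^2,& d>n.\end{cases}$$ Moreover, in both regimes $\mathsf{V}_{\mathsf{R},0}=\mathsf{V}_{\mathsf{N},0}$ and $\mathsf{B}_{\mathsf{R},0}+\mathsf{B}_{\mathsf{N},0}=\|\beta_*\|_2^2$.
   Context: These are deterministic equivalents of the bias/variance of the test risk $\mathbb{E}_\varepsilon\|\beta_*-\hat\beta_{\min}\|_\Sigma^2$ and of the squared norm $\mathbb{E}_\varepsilon\|\hat\beta_{\min}\|_2^2$ for the minimum-$\ell_2$-norm interpolator $\hat\beta_{\min}$ in linear regression with $n$ samples, dimension $d$, covariance $\Sigma$, noise variance $\sigma^2$; they are defined directly by the formulas in the claim. *)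

(* Defs.v *)
(* R : rcfType (real closed field, needed for Num.sqrt). *)
From HB Require Import structures.
From mathcomp Require Import all_boot all_order all_algebra.
Set Implicit Arguments. Unset Strict Implicit. Unset Printing Implicit Defensive.
Import Order.TTheory GRing.Theory Num.Theory.
Local Open Scope ring_scope.

Section DetEquiv.
Variables (R : rcfType) (d n : nat).
Implicit Types (Sigma : 'M[R]_d) (beta : 'cV[R]_d).

Definition qform (M : 'M[R]_d) beta : R := (beta^T *m M *m beta) 0 0.
Definition sqnorm beta : R := (beta^T *m beta) 0 0.
Definition resolv Sigma lam : 'M[R]_d := invmx (Sigma + lam%:M).

(* Deterministic equivalents of the min-norm interpolator.  The argument
   lam plays the role of lambda_n and is only used in the regime d > n. *)
Definition BR0 Sigma beta (sigma2 lam : R) : R :=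
  if (d < n)%N then 0 else
  lam ^+ 2 * qform (Sigma *m resolv Sigma lam ^+ 2) beta /
  (1 - n%:R^-1 * \tr (Sigma ^+ 2 *m resolv Sigma lam ^+ 2)).

Definition VR0 Sigma beta (sigma2 lam : R) : R :=
  if (d < n)%N then sigma2 * d%:R / (n%:R - d%:R) else
  sigma2 * \tr (Sigma ^+ 2 *m resolv Sigma lam ^+ 2) /
  (n%:R - \tr (Sigma ^+ 2 *m resolv Sigma lam ^+ 2)).

Definition BN0 Sigma beta (sigma2 lam : R) : R :=
  if (d < n)%N then sqnorm beta else
  qform (Sigma *m resolv Sigma lam) beta.

Definition VN0 Sigma beta (sigma2 lam : R) : R :=
  if (d < n)%N then sigma2 * \tr (invmx Sigma) / (n%:R - d%:R) else
  sigma2 * \tr (Sigma *m resolv Sigma lam ^+ 2) /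
  (n%:R - \tr (Sigma ^+ 2 *m resolv Sigma lam ^+ 2)).

Definition R0 Sigma beta (sigma2 lam : R) : R :=
  BR0 Sigma beta sigma2 lam + VR0 Sigma beta sigma2 lam.
Definition N0 Sigma beta (sigma2 lam : R) : R :=
  BN0 Sigma beta sigma2 lam + VN0 Sigma beta sigma2 lam.

End DetEquiv.

(* Main.v *)
Require Import Defs.
From HB Require Import structures.
From mathcomp Require Import all_boot all_order all_algebra.
From mathcomp Require Import ring lra.
Import Order.TTheory GRing.Theory Num.Theory.
Local Open Scope ring_scope.

Lemma scX (R : comUnitRingType) d (a : R) k : (a%:M : 'M[R]_d) ^+ k = (a ^+ k)%:M.
Proof. elim: k => [|k IH]; first by rewrite !expr0.
by rewrite !exprS IH /= scalar_mxM. Qed.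

Lemma qformS (R : rcfType) d (a : R) (b : 'cV[R]_d) : qform (a%:M) b = a * sqnorm b.
Proof. by rewrite /qform /sqnorm mul_mx_scalar -scalemxAl mxE. Qed.

Lemma sqnorm_ge0 {R : rcfType} {d} (b : 'cV[R]_d) : 0 <= sqnorm b.
Proof. rewrite /sqnorm mxE; apply: sumr_ge0 => i _; rewrite mxE -expr2; exact: sqr_ge0. Qed.

Lemma resolvE (R : rcfType) d (lam : R) : resolv (1%:M : 'M[R]_d) lam = ((1 + lam)^-1)%:M.
Proof. by rewrite /resolv -(rmorphD (@scalar_mx R d)) invmx_scalar. Qed.
Theorem corollary6 (R : rcfType) (d n : nat) (beta : 'cV[R]_d) (sigma2 : R) :
  0 <= sigma2 ->
  ((d < n)%N -> forall lam : R,
     let Sigma := (1%:M : 'M[R]_d) in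
     [/\ R0 n Sigma beta sigma2 lam = N0 n Sigma beta sigma2 lam - sqnorm beta,
         VR0 n Sigma beta sigma2 lam = VN0 n Sigma beta sigma2 lam
       & BR0 n Sigma beta sigma2 lam + BN0 n Sigma beta sigma2 lam = sqnorm beta])
  /\
  ((n < d)%N -> forall lam : R,
     let Sigma := (1%:M : 'M[R]_d) in
     0 < lam -> \tr (Sigma *m resolv Sigma lam) = n%:R ->
     [/\ R0 n Sigma beta sigma2 lam =
           Num.sqrt ((N0 n Sigma beta sigma2 lam - (sqnorm beta - sigma2)) ^+ 2
                     + 4 * sqnorm beta * sigma2) - sigma2,
         VR0 n Sigma beta sigma2 lam = VN0 n Sigma beta sigma2 lam
       & BR0 n Sigma beta sigma2 lam + BN0 n Sigma beta sigma2 lam = sqnorm beta]).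
Proof.
move=> s0; split.
  move=> dn lam Sigma; rewrite /R0 /N0 /BR0 /VR0 /BN0 /VN0 dn /Sigma invmx1 mxtrace1.
  by split; rewrite ?add0r //; ring.
move=> nd lam Sigma lam0; rewrite /Sigma resolvE mul1mx mxtrace_scalar => hn.
have dn : (d < n)%N = false by apply/negbTE; rewrite -leqNgt ltnW.
rewrite /R0 /N0 /BR0 /VR0 /BN0 /VN0 dn !resolvE.
rewrite -!scalar_mxM !scX !mul1mx -!scalar_mxM !qformS mxtrace_scalar.
set t := (1 + lam)^-1 in hn *.
set B := sqnorm beta.
have B0 : 0 <= B := sqnorm_ge0 beta.
have lam1 : 1 + lam != 0 by rewrite gt_eqF // ltr_wpDr // ltW.
have dpos : (0 < d)%N by apply: leq_ltn_trans nd.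
have d0 : d%:R != 0 :> R by rewrite pnatr_eq0 -lt0n.
have n0 : n%:R != 0 :> R.
  rewrite pnatr_eq0; apply/negP => /eqP n0; move: hn; rewrite n0 => /eqP.
  by rewrite mulrn_eq0 /t invr_eq0 (negbTE lam1) orbF => /eqP d00; rewrite d00 in dpos.
have t0 : 0 < t by rewrite /t invr_gt0 ltr_wpDr // ltW.
have lamt : lam * t = 1 - t by rewrite /t; field.
have t1 : t < 1.
  have : n%:R < d%:R :> R by rewrite ltr_nat.
  rewrite -hn -[t *+ d]mulr_natr -[X in _ < X -> _]mul1r ltr_pM2r //.
  by rewrite ltr0n.
have r1 : 1 - t != 0 by rewrite subr_eq0 eq_sym lt_eqF.
rewrite mxtrace_scalar !expr1n !mul1r.
have E1 : lam^+2 * (t^+2 * B) = (1-t)^+2 * B by rewrite mulrA -exprMn lamt.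
have E2 : t^+2 *+ d = n%:R * t by rewrite exprS expr1 -mulrnAr hn mulrC.
rewrite E1 E2; clearbody t B.
set c := sigma2 * (n%:R * t) / (n%:R - n%:R * t).
have hc : c = sigma2 * t / (1 - t) .
  have hd : n%:R - n%:R * t = n%:R * (1 - t) :> R by ring.
  rewrite /c hd; field; by rewrite r1 n0.
rewrite mulKf //; clearbody c.
have hb : (1-t)^+2 * B / (1 - t) = (1 - t) * B by field; rewrite r1.
rewrite hb; split; last by ring.
  have c0 : 0 <= c by rewrite hc; apply: divr_ge0; [apply: mulr_ge0 => //; exact: ltW | rewrite subr_ge0; exact: ltW].
  have -> : (t * B + c - (B - sigma2)) ^+ 2 + 4 * B * sigma2 = ((1-t)*B + c + sigma2)^+2.
    by rewrite hc; field.
  rewrite sqrtr_sqr ger0_norm; first by ring.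
  by rewrite !addr_ge0 // mulr_ge0 // subr_ge0 ltW.
by [].
Qed.
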